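(* Let $F$ be a field with $\mathrm{char}\,F\ne2$ and let $A$ be an involutive $F$-algebra. Then $A$ is reversible if and only if every $3$-dimensional subalgebra of $A$ is commutative.
   Context: Algebras are unital, with bilinear not necessarily associative multiplication. $A$ is involutive if there is an anti-automorphism $a\mapsto\bar a$ with $\bar{\bar a}=a$, $a+\bar a\in F1$ and $a\bar a\in F1$ for all $a\in A$. $A$ is reversible if $ab=0$ implies $ba=0$ for all $a,b\in A$. *)

(* Defs.v *)
(* A (possibly infinite-dimensional) unital, not necessarily
   associative F-algebra is given by an F-module V, a bilinear product m and a
   unit element e. *)
From HB Require Import structures.
From mathcomp Require Import all_boot all_order all_algebra.
Set Implicit Arguments. Unset Strict Implicit. Unset Printing Implicit Defensive.
Import Order.TTheory GRing.Theory Num.Theory.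
Local Open Scope ring_scope.

Section AlgDefs.
Variables (F : fieldType) (V : lmodType F).

Definition bilinear_mul (m : V -> V -> V) : Prop :=
  (forall (a : F) (x y z : V), m (a *: x + y) z = a *: m x z + m y z) /\
  (forall (a : F) (x y z : V), m z (a *: x + y) = a *: m z x + m z y).

Definition unit_elt (m : V -> V -> V) (e : V) : Prop :=
  forall x : V, m e x = x /\ m x e = x.

Definition involutive_alg (m : V -> V -> V) (e : V) (bar : V -> V) : Prop :=
  [/\ (forall (a : F) (x y : V), bar (a *: x + y) = a *: bar x + bar y),
      (forall x y : V, bar (m x y) = m (bar y) (bar x)),
      (forall x : V, bar (bar x) = x),
      (forall x : V, exists t : F, x + bar x = t *: e) &
      (forall x : V, exists t : F, m x (bar x) = t *: e)].

Definition reversible (m : V -> V -> V) : Prop :=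
  forall a b : V, m a b = 0 -> m b a = 0.

Definition lin_indep3 (u1 u2 u3 : V) : Prop :=
  forall a b c : F, a *: u1 + b *: u2 + c *: u3 = 0 -> [/\ a = 0, b = 0 & c = 0].

Definition span3 (u1 u2 u3 : V) (x : V) : Prop :=
  exists a b c : F, x = a *: u1 + b *: u2 + c *: u3.

Definition subalgebra3 (m : V -> V -> V) (e u1 u2 u3 : V) : Prop :=
  [/\ lin_indep3 u1 u2 u3,
      span3 u1 u2 u3 e &
      (forall x y : V, span3 u1 u2 u3 x -> span3 u1 u2 u3 y ->
                       span3 u1 u2 u3 (m x y))].

Definition commutative_on (m : V -> V -> V) (P : V -> Prop) : Prop :=
  forall x y : V, P x -> P y -> m x y = m y x.

End AlgDefs.

(* Main.v *)
Require Import Defs.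
From HB Require Import structures.
From mathcomp Require Import all_boot all_order all_algebra.
From mathcomp Require Import ring.
From Stdlib Require Import Classical.
Import Order.TTheory GRing.Theory Num.Theory.
Local Open Scope ring_scope.
Set Implicit Arguments. Unset Strict Implicit. Unset Printing Implicit Defensive.



Lemma mDl (F : fieldType) (V : lmodType F) (m : V -> V -> V) :
  bilinear_mul m -> forall u v w, m (u + v) w = m u w + m v w.
Proof. by move=> [h1 h2] u v w; rewrite -[u]scale1r h1 !scale1r. Qed.
Lemma mDr (F : fieldType) (V : lmodType F) (m : V -> V -> V) :
  bilinear_mul m -> forall u v w, m w (u + v) = m w u + m w v.
Proof. by move=> [h1 h2] u v w; rewrite -[u]scale1r h2 !scale1r. Qed.
Lemma m0l (F : fieldType) (V : lmodType F) (m : V -> V -> V) :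
  bilinear_mul m -> forall w, m 0 w = 0.
Proof.
move=> hm w; have H := mDl hm 0 0 w; rewrite addr0 in H.
by apply: (addrI (m 0 w)); rewrite addr0 -H.
Qed.
Lemma m0r (F : fieldType) (V : lmodType F) (m : V -> V -> V) :
  bilinear_mul m -> forall w, m w 0 = 0.
Proof.
move=> hm w; have H := mDr hm 0 0 w; rewrite addr0 in H.
by apply: (addrI (m w 0)); rewrite addr0 -H.
Qed.
Lemma mZl (F : fieldType) (V : lmodType F) (m : V -> V -> V) :
  bilinear_mul m -> forall (a : F) u w, m (a *: u) w = a *: m u w.
Proof. by move=> hm a u w; have := proj1 hm a u 0 w; rewrite !addr0 (m0l hm) addr0. Qed.
Lemma mZr (F : fieldType) (V : lmodType F) (m : V -> V -> V) :
  bilinear_mul m -> forall (a : F) u w, m w (a *: u) = a *: m w u.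
Proof. by move=> hm a u w; have := proj2 hm a u 0 w; rewrite !addr0 (m0r hm) addr0. Qed.
Lemma mNl (F : fieldType) (V : lmodType F) (m : V -> V -> V) :
  bilinear_mul m -> forall u w, m (- u) w = - m u w.
Proof. by move=> hm u w; rewrite -scaleN1r (mZl hm) scaleN1r. Qed.
Lemma mNr (F : fieldType) (V : lmodType F) (m : V -> V -> V) :
  bilinear_mul m -> forall u w, m w (- u) = - m w u.
Proof. by move=> hm u w; rewrite -scaleN1r (mZr hm) scaleN1r. Qed.

Definition lc (F : fieldType) (V : lmodType F) (e x y : V) (a b c : F) : V :=
  a *: e + b *: x + c *: y.

Lemma lcD (F : fieldType) (V : lmodType F) (e x y : V) a b c a' b' c' :
  lc e x y a b c + lc e x y a' b' c' = lc e x y (a + a') (b + b') (c + c').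
Proof. by rewrite /lc !scalerDl [LHS]addrACA [in LHS](addrACA (a *: e)). Qed.
Lemma lcZ (F : fieldType) (V : lmodType F) (e x y : V) k a b c :
  k *: lc e x y a b c = lc e x y (k * a) (k * b) (k * c).
Proof. by rewrite /lc !scalerDr !scalerA. Qed.
Lemma lcN (F : fieldType) (V : lmodType F) (e x y : V) a b c :
  - lc e x y a b c = lc e x y (- a) (- b) (- c).
Proof. by rewrite /lc !opprD !scaleNr. Qed.
Lemma lc0 (F : fieldType) (V : lmodType F) (e x y : V) :
  lc e x y 0 0 0 = 0.
Proof. by rewrite /lc !scale0r !addr0. Qed.

Lemma lc100 (F : fieldType) (V : lmodType F) (e x y : V) : lc e x y 1 0 0 = e.
Proof. by rewrite /lc scale1r !scale0r !addr0. Qed.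
Lemma lc010 (F : fieldType) (V : lmodType F) (e x y : V) : lc e x y 0 1 0 = x.
Proof. by rewrite /lc scale1r !scale0r add0r addr0. Qed.
Lemma lc001 (F : fieldType) (V : lmodType F) (e x y : V) : lc e x y 0 0 1 = y.
Proof. by rewrite /lc scale1r !scale0r !add0r. Qed.

Definition mlc1 (F : fieldType) (p q r s a b c a' b' c' : F) :=
  a * a' + b * b' * p + b * c' * q + c * b' * r + c * c' * s.
Definition mlc2 (F : fieldType) (p q r s a b c a' b' c' : F) :=
  a * b' + b * a' + b * b' * p + b * c' * q + c * b' * r + c * c' * s.
Definition mlc3 (F : fieldType) (p q r s a b c a' b' c' : F) :=
  a * c' + c * a' + b * b' * p + b * c' * q + c * b' * r + c * c' * s.

Lemma mul_lc (F : fieldType) (V : lmodType F) (m : V -> V -> V) (e x y : V) :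
  bilinear_mul m -> unit_elt m e ->
  forall p1 p2 p3 q1 q2 q3 r1 r2 r3 s1 s2 s3,
  m x x = lc e x y p1 p2 p3 -> m x y = lc e x y q1 q2 q3 ->
  m y x = lc e x y r1 r2 r3 -> m y y = lc e x y s1 s2 s3 ->
  forall a b c a' b' c',
  m (lc e x y a b c) (lc e x y a' b' c') =
  lc e x y (mlc1 p1 q1 r1 s1 a b c a' b' c') (mlc2 p2 q2 r2 s2 a b c a' b' c')
           (mlc3 p3 q3 r3 s3 a b c a' b' c').
Proof.
move=> hm he p1 p2 p3 q1 q2 q3 r1 r2 r3 s1 s2 s3 hxx hxy hyx hyy a b c a' b' c'.
have hee : m e e = lc e x y 1 0 0 by rewrite lc100 (proj1 (he e)).
have hex : m e x = lc e x y 0 1 0 by rewrite lc010 (proj1 (he x)).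
have hey : m e y = lc e x y 0 0 1 by rewrite lc001 (proj1 (he y)).
have hxe : m x e = lc e x y 0 1 0 by rewrite lc010 (proj2 (he x)).
have hye : m y e = lc e x y 0 0 1 by rewrite lc001 (proj2 (he y)).
transitivity (m (a*:e+b*:x+c*:y) (a'*:e+b'*:x+c'*:y)); first by [].
rewrite !(mDl hm) !(mDr hm) !(mZl hm) !(mZr hm).
rewrite hee hex hey hxe hye hxx hxy hyx hyy !lcZ !lcD /mlc1 /mlc2 /mlc3.
by congr lc; ring.
Qed.


Lemma norm_scalar (F : fieldType) (p q al be : F) : (2%:R : F) != 0 ->
 (forall a b c a' b' c',
   mlc1 (-p) al al (-q) a b c a' b' c' = 0 ->
   mlc2 0 be (-be) 0 a b c a' b' c' = 0 ->
   mlc3 0 0 0 0 a b c a' b' c' = 0 ->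
   [/\ mlc1 (-p) al al (-q) a' b' c' a b c = 0,
       mlc2 0 be (-be) 0 a' b' c' a b c = 0 &
       mlc3 0 0 0 0 a' b' c' a b c = 0]) -> be = 0.
Proof.
move=> h2 H.
have := H 0 1 0 (be * p) (-al) (-p); rewrite /mlc1 /mlc2 /mlc3.
move=> /(_ ltac:(ring) ltac:(ring) ltac:(ring)) [_ E1 _].
have {}E1 : 2%:R * (be * p) = 0 by rewrite -E1; ring.
have [//|bne] := eqVneq be 0.
move: E1 => /eqP; rewrite mulf_eq0 (negbTE h2) /= mulf_eq0 (negbTE bne) /= => /eqP p0.
subst p.
have := H be 0 1 (- al * be) (be * be + q) al; rewrite /mlc1 /mlc2 /mlc3.
move=> /(_ ltac:(ring) ltac:(ring) ltac:(ring)) [_ E2 _].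
have := H be 1 1 (- al * be) (be * be + q - al) al; rewrite /mlc1 /mlc2 /mlc3.
move=> /(_ ltac:(ring) ltac:(ring) ltac:(ring)) [_ E3 _].
have {}E2 : 2%:R * be * (be * be + q) = 0 by rewrite -E2; ring.
have {}E3 : 2%:R * be * (be * be + q - 2%:R * al) = 0 by rewrite -E3; ring.
have b2 : 2%:R * be != 0 by rewrite mulf_neq0.
move: E2 => /eqP; rewrite mulf_eq0 (negbTE b2) /= => /eqP Q.
move: E3 => /eqP; rewrite mulf_eq0 (negbTE b2) /= Q sub0r oppr_eq0 mulf_eq0 (negbTE h2) /= => /eqP al0.
subst al.
have := H 0 1 0 (-be) 0 1; rewrite /mlc1 /mlc2 /mlc3.
move=> /(_ ltac:(ring) ltac:(ring) ltac:(ring)) [_ E5 _].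
have E6 : 2%:R * be = 0 by rewrite -oppr0 -E5; ring.
by move: E6 => /eqP; rewrite mulf_eq0 (negbTE h2) /= => /eqP.
Qed.


Lemma lc_subst (F : fieldType) (V : lmodType F) (e x y : V) a1 b1 c1 a2 b2 c2 a b c :
  lc e (lc e x y a1 b1 c1) (lc e x y a2 b2 c2) a b c =
  lc e x y (a + b * a1 + c * a2) (b * b1 + c * b2) (b * c1 + c * c2).
Proof.
unfold lc at 1.
have -> : a *: e = lc e x y a 0 0 by rewrite /lc !scale0r !addr0.
by rewrite !lcZ !lcD; congr lc; ring.
Qed.


Lemma bar0 (F : fieldType) (V : lmodType F) (bar : V -> V) :
  (forall (a : F) (x y : V), bar (a *: x + y) = a *: bar x + bar y) -> bar 0 = 0.
Proof.
move=> hb; have H := hb 1 0 0; rewrite !scale1r addr0 in H.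
by apply: (addrI (bar 0)); rewrite addr0 -H.
Qed.
Lemma barD (F : fieldType) (V : lmodType F) (bar : V -> V) :
  (forall (a : F) (x y : V), bar (a *: x + y) = a *: bar x + bar y) ->
  forall u v, bar (u + v) = bar u + bar v.
Proof. by move=> hb u v; rewrite -[u]scale1r hb !scale1r. Qed.
Lemma barZ (F : fieldType) (V : lmodType F) (bar : V -> V) :
  (forall (a : F) (x y : V), bar (a *: x + y) = a *: bar x + bar y) ->
  forall a u, bar (a *: u) = a *: bar u.
Proof. by move=> hb a u; rewrite -[a *: u]addr0 hb (bar0 hb) addr0. Qed.
Lemma barN (F : fieldType) (V : lmodType F) (bar : V -> V) :
  (forall (a : F) (x y : V), bar (a *: x + y) = a *: bar x + bar y) ->
  forall u, bar (- u) = - bar u.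
Proof. by move=> hb u; rewrite -scaleN1r (barZ hb) scaleN1r. Qed.
Lemma bar_lc (F : fieldType) (V : lmodType F) (bar : V -> V) :
  (forall (a : F) (x y : V), bar (a *: x + y) = a *: bar x + bar y) ->
  forall e x y a b c, bar (lc e x y a b c) = lc (bar e) (bar x) (bar y) a b c.
Proof. by move=> hb e x y a b c; rewrite /lc !(barD hb) !(barZ hb). Qed.

Lemma bar_e (F : fieldType) (V : lmodType F) (m : V -> V -> V) (e : V) (bar : V -> V) :
  unit_elt m e -> involutive_alg m e bar -> bar e = e.
Proof.
move=> he [hb hbm hbb _ _].
have L : forall z, m (bar e) z = z.
  by move=> z; rewrite -{1}(hbb z) -hbm (proj2 (he _)) hbb.
by rewrite -(proj2 (he (bar e))) L.
Qed.

Lemma quad (F : fieldType) (V : lmodType F) (m : V -> V -> V) (e : V) (bar : V -> V) :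
  bilinear_mul m -> unit_elt m e -> involutive_alg m e bar ->
  forall x, exists t n : F, bar x = t *: e - x /\ m x x = t *: x - n *: e.
Proof.
move=> hm he [hb hbm hbb htr hnr] x.
have [t ht] := htr x; have [n hn] := hnr x.
have hbx : bar x = t *: e - x by rewrite -ht addrAC subrr add0r.
exists t, n; split => //.
rewrite hbx (mDr hm) (mNr hm) (mZr hm) (proj2 (he x)) in hn.
by rewrite -hn opprB addrC subrK.
Qed.

Lemma pure_sq (F : fieldType) (V : lmodType F) (m : V -> V -> V) (e : V) (bar : V -> V) :
  bilinear_mul m -> unit_elt m e -> involutive_alg m e bar ->
  forall x, e != 0 -> bar x = - x -> exists n : F, m x x = - (n *: e).
Proof.
move=> hm he hi x ne hx.
have [t [n [h1 h2]]] := quad hm he hi x.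
have : t *: e = 0 by rewrite -[t *: e](subrK x) -h1 hx addNr.
move/eqP; rewrite scaler_eq0 (negbTE ne) orbF => /eqP t0.
by exists n; rewrite h2 t0 scale0r sub0r.
Qed.

Lemma indep_e (F : fieldType) (V : lmodType F) (e x y : V) :
  lin_indep3 e x y -> e != 0.
Proof.
move=> hi; apply/eqP => e0.
have [] := hi 1 0 0; first by rewrite e0 !scale0r scaler0 !addr0.
by move=> /eqP; rewrite oner_eq0.
Qed.

Lemma norm_vec (F : fieldType) (V : lmodType F) (m : V -> V -> V) (e : V) (bar : V -> V)
   (x y : V) (al be : F) :
  (2%:R : F) != 0 -> bilinear_mul m -> unit_elt m e -> involutive_alg m e bar ->
  reversible m -> lin_indep3 e x y -> bar x = - x -> bar y = - y ->
  m x y = lc e x y al be 0 -> be = 0.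
Proof.
move=> h2 hm he hi hr hind hx hy hxy.
have ne := indep_e hind.
have [p hp] := pure_sq hm he hi ne hx.
have [q hq] := pure_sq hm he hi ne hy.
have hxx : m x x = lc e x y (- p) 0 0 by rewrite hp /lc !scale0r !addr0 scaleNr.
have hyy : m y y = lc e x y (- q) 0 0 by rewrite hq /lc !scale0r !addr0 scaleNr.
have hyx : m y x = lc e x y al (- be) 0.
  have [hb hbm hbb _ _] := hi.
  rewrite -(opprK y) -(opprK x) (mNl hm) (mNr hm) opprK -hx -hy -hbm hxy (bar_lc hb).
  by rewrite (bar_e he hi) hx hy /lc !scale0r scalerN scaleNr opprK.
have NS := (@norm_scalar F p q al be h2). apply: NS => a b c a' b' c' h1 h3 h4.
have := hr (lc e x y a b c) (lc e x y a' b' c').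
rewrite !(mul_lc hm he hxx hxy hyx hyy) h1 h3 h4 lc0 => /(_ erefl).
exact: hind.
Qed.

Lemma lc_subst1 (F : fieldType) (V : lmodType F) (e x y : V) a1 b1 c1 a b c :
  lc e (lc e x y a1 b1 c1) y a b c =
  lc e x y (a + b * a1) (b * b1) (b * c1 + c).
Proof.
unfold lc at 1.
have -> : a *: e = lc e x y a 0 0 by rewrite /lc !scale0r !addr0.
have -> : c *: y = lc e x y 0 0 c by rewrite /lc !scale0r !add0r.
by rewrite !lcZ !lcD; congr lc; ring.
Qed.
Lemma lc_swap (F : fieldType) (V : lmodType F) (e x y : V) a b c :
  lc e x y a b c = lc e y x a c b.
Proof. by rewrite /lc addrAC. Qed.
Lemma lc_negxy (F : fieldType) (V : lmodType F) (e x y : V) a b c :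
  lc e (- x) (- y) a b c = lc e x y a (- b) (- c).
Proof. by rewrite /lc !scalerN !scaleNr. Qed.
Lemma indep_swap (F : fieldType) (V : lmodType F) (e x y : V) :
  lin_indep3 e x y -> lin_indep3 e y x.
Proof.
move=> hi a b c H; have [] := hi a c b; first by rewrite addrAC.
by move=> -> -> ->.
Qed.

Lemma core_pure (F : fieldType) (V : lmodType F) (m : V -> V -> V) (e : V) (bar : V -> V)
   (x y : V) (al be ga : F) :
  (2%:R : F) != 0 -> bilinear_mul m -> unit_elt m e -> involutive_alg m e bar ->
  reversible m -> lin_indep3 e x y -> bar x = - x -> bar y = - y ->
  m x y = lc e x y al be ga -> m x y = m y x.
Proof.
move=> h2 hm he hi hr hind hx hy hxy.
have ne := indep_e hind.
have [hb hbm hbb _ _] := hi.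
have [p hp] := pure_sq hm he hi ne hx.
have [q hq] := pure_sq hm he hi ne hy.
have hxx : m x x = lc e x y (- p) 0 0 by rewrite hp /lc !scale0r !addr0 scaleNr.
have hyy : m y y = lc e x y (- q) 0 0 by rewrite hq /lc !scale0r !addr0 scaleNr.
have hyx : m y x = lc e x y al (- be) (- ga).
  rewrite -(opprK y) -(opprK x) (mNl hm) (mNr hm) opprK -hx -hy -hbm hxy (bar_lc hb).
  by rewrite (bar_e he hi) hx hy lc_negxy !opprK.
have be0 : be = 0.
  have [//|bne] := eqVneq be 0.
  pose x' := lc e x y 0 be ga.
  have ind' : lin_indep3 e x' y.
    move=> a b c H.
    have : lc e x y (a + b * 0) (b * be) (b * ga + c) = 0.
      by rewrite -lc_subst1 -H.
    move=> /hind [ha hbb' hc].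
    move: hbb' => /eqP; rewrite mulf_eq0 (negbTE bne) orbF => /eqP b0.
    by move: ha hc; rewrite b0 !mul0r addr0 add0r => -> ->.
  have px' : bar x' = - x'.
    by rewrite /x' (bar_lc hb) (bar_e he hi) hx hy lc_negxy lcN oppr0.
  have hx'y : m x' y = lc e x' y (al * be - ga * q) be 0.
    have -> : m x' y = m (lc e x y 0 be ga) (lc e x y 0 0 1) by rewrite lc001.
    rewrite (mul_lc hm he hxx hxy hyx hyy) /x' lc_subst1 /mlc1 /mlc2 /mlc3.
    by congr lc; ring.
  have := norm_vec h2 hm he hi hr ind' px' hy hx'y.
  by move=> b0; rewrite b0 eqxx in bne.
subst be.
have ga0 : ga = 0.
  have hyx' : m y x = lc e y x al (- ga) 0 by rewrite hyx lc_swap oppr0.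
  have := norm_vec h2 hm he hi hr (indep_swap hind) hy hx hyx'.
  by move/eqP; rewrite oppr_eq0 => /eqP.
by rewrite hxy hyx ga0 !oppr0.
Qed.


Lemma comm_add (F : fieldType) (V : lmodType F) (m : V -> V -> V) :
  bilinear_mul m -> forall u v w, m u v = m v u -> m u w = m w u ->
  m u (v + w) = m (v + w) u.
Proof. by move=> hm u v w h1 h2; rewrite (mDl hm) (mDr hm) h1 h2. Qed.
Lemma comm_scale (F : fieldType) (V : lmodType F) (m : V -> V -> V) :
  bilinear_mul m -> forall u v a, m u v = m v u -> m u (a *: v) = m (a *: v) u.
Proof. by move=> hm u v a h1; rewrite (mZl hm) (mZr hm) h1. Qed.
Lemma comm_lc_r (F : fieldType) (V : lmodType F) (m : V -> V -> V) :
  bilinear_mul m -> forall u e x y a b c, m u e = m e u -> m u x = m x u -> m u y = m y u ->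
  m u (lc e x y a b c) = m (lc e x y a b c) u.
Proof.
move=> hm u e x y a b c h1 h2 h3; rewrite /lc.
apply: (comm_add hm); last exact: (comm_scale hm).
apply: (comm_add hm); exact: (comm_scale hm).
Qed.
Lemma comm_lc (F : fieldType) (V : lmodType F) (m : V -> V -> V) (e x y : V) :
  bilinear_mul m -> unit_elt m e -> m x y = m y x ->
  forall a b c a' b' c',
  m (lc e x y a b c) (lc e x y a' b' c') = m (lc e x y a' b' c') (lc e x y a b c).
Proof.
move=> hm he hxy a b c a' b' c'.
have ce : forall u, m u e = m e u by move=> u; rewrite (proj1 (he u)) (proj2 (he u)).
apply: comm_lc_r => //.
  apply/esym; apply: comm_lc_r => //; exact/esym.
apply/esym; apply: comm_lc_r => //.
Qed.

Lemma core (F : fieldType) (V : lmodType F) (m : V -> V -> V) (e : V) (bar : V -> V)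
   (x0 y0 : V) :
  (2%:R : F) != 0 -> bilinear_mul m -> unit_elt m e -> involutive_alg m e bar ->
  reversible m -> lin_indep3 e x0 y0 ->
  (forall z1 z2, span3 e x0 y0 z1 -> span3 e x0 y0 z2 -> span3 e x0 y0 (m z1 z2)) ->
  commutative_on m (span3 e x0 y0).
Proof.
move=> h2 hm he hi hr hind hcl.
have [hb hbm hbb _ _] := hi.
have hbe := bar_e he hi.
have [t0 [n0 [hbx _]]] := quad hm he hi x0.
have [s0 [k0 [hby _]]] := quad hm he hi y0.
have Ex : t0 *: e - x0 = lc e x0 y0 t0 (-1) 0 by rewrite /lc scaleN1r scale0r addr0.
have Ey : s0 *: e - y0 = lc e x0 y0 s0 0 (-1) by rewrite /lc scaleN1r scale0r addr0.
pose x := lc e x0 y0 (- t0) 2%:R 0.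
pose y := lc e x0 y0 (- s0) 0 2%:R.
have px : bar x = - x.
  by rewrite /x (bar_lc hb) hbe hbx hby Ex Ey lc_subst lcN; congr lc; ring.
have py : bar y = - y.
  by rewrite /y (bar_lc hb) hbe hbx hby Ex Ey lc_subst lcN; congr lc; ring.
have ind : lin_indep3 e x y.
  move=> a b c H.
  have : lc e x0 y0 (a + b * (- t0) + c * (- s0)) (b * 2%:R + c * 0) (b * 0 + c * 2%:R) = 0.
    by rewrite -lc_subst; exact: H.
  move=> /hind [ha hb' hc].
  move: hb' hc; rewrite !mulr0 addr0 add0r => /eqP hb' /eqP hc.
  move: hb' hc; rewrite !mulf_eq0 (negbTE h2) !orbF => /eqP b0 /eqP c0.
  by move: ha; rewrite b0 c0 !mul0r !addr0.
have sx : span3 e x0 y0 x by exists (- t0), 2%:R, 0.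
have sy : span3 e x0 y0 y by exists (- s0), 0, 2%:R.
have [A [B [C hABC]]] := hcl x y sx sy.
have hxy : m x y = lc e x y (A + B * t0 / 2%:R + C * s0 / 2%:R) (B / 2%:R) (C / 2%:R).
  rewrite hABC /x /y lc_subst.
  rewrite -[A *: e + B *: x0 + C *: y0]/(lc e x0 y0 A B C).
  by congr lc; field.
have cxy := core_pure h2 hm he hi hr ind px py hxy.
have Ex0 : lc e x y (t0 / 2%:R) (2%:R^-1) 0 = x0.
  by rewrite /x /y lc_subst; apply: (etrans _ (lc010 e x0 y0)); congr lc; field.
have Ey0 : lc e x y (s0 / 2%:R) 0 (2%:R^-1) = y0.
  by rewrite /x /y lc_subst; apply: (etrans _ (lc001 e x0 y0)); congr lc; field.
have := comm_lc hm he cxy (t0 / 2%:R) (2%:R^-1) 0 (s0 / 2%:R) 0 (2%:R^-1).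
rewrite Ex0 Ey0 => cx0.
move=> z1 z2 [a [b [c ->]]] [a' [b' [c' ->]]].
exact: (comm_lc hm he cx0 a b c a' b' c').
Qed.


Lemma lc_subst0 (F : fieldType) (V : lmodType F) (e x y : V) a1 b1 c1 a b c :
  lc (lc e x y a1 b1 c1) x y a b c =
  lc e x y (a * a1) (a * b1 + b) (a * c1 + c).
Proof.
unfold lc at 1.
have -> : b *: x = lc e x y 0 b 0 by rewrite /lc !scale0r add0r addr0.
have -> : c *: y = lc e x y 0 0 c by rewrite /lc !scale0r !add0r.
by rewrite !lcZ !lcD; congr lc; ring.
Qed.

Lemma reduce (F : fieldType) (V : lmodType F) (u1 u2 u3 E : V) k1 k2 k3 :
  lin_indep3 u1 u2 u3 -> E = lc u1 u2 u3 k1 k2 k3 -> k1 != 0 ->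
  lin_indep3 E u2 u3 /\ forall z, span3 u1 u2 u3 z <-> span3 E u2 u3 z.
Proof.
move=> hind -> k1ne; split.
  move=> a b c H.
  have : lc u1 u2 u3 (a * k1) (a * k2 + b) (a * k3 + c) = 0.
    by rewrite -lc_subst0; exact: H.
  move=> /hind [ha hb hc].
  move: ha => /eqP; rewrite mulf_eq0 (negbTE k1ne) orbF => /eqP a0.
  by move: hb hc; rewrite a0 !mul0r !add0r => -> ->.
move=> z; split.
  move=> [a [b [c ->]]].
  exists (a / k1), (b - a / k1 * k2), (c - a / k1 * k3).
  change (lc u1 u2 u3 a b c = lc (lc u1 u2 u3 k1 k2 k3) u2 u3 (a / k1) (b - a / k1 * k2) (c - a / k1 * k3)).
  by rewrite lc_subst0; congr lc; field.
move=> [a [b [c ->]]].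
exists (a * k1), (a * k2 + b), (a * k3 + c).
exact: lc_subst0.
Qed.

Lemma span_p12 (F : fieldType) (V : lmodType F) (u1 u2 u3 z : V) :
  span3 u1 u2 u3 z -> span3 u2 u1 u3 z.
Proof. by move=> [a [b [c ->]]]; exists b, a, c; rewrite (addrC (a *: u1)). Qed.
Lemma span_p13 (F : fieldType) (V : lmodType F) (u1 u2 u3 z : V) :
  span3 u1 u2 u3 z -> span3 u3 u2 u1 z.
Proof.
move=> [a [b [c ->]]]; exists c, b, a.
by rewrite addrC (addrC (a *: u1)) addrA.
Qed.
Lemma indep_p12 (F : fieldType) (V : lmodType F) (u1 u2 u3 : V) :
  lin_indep3 u1 u2 u3 -> lin_indep3 u2 u1 u3.
Proof.
move=> hi a b c H; have [] := hi b a c; first by rewrite (addrC (b *: u1)).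
by move=> -> -> ->.
Qed.
Lemma indep_p13 (F : fieldType) (V : lmodType F) (u1 u2 u3 : V) :
  lin_indep3 u1 u2 u3 -> lin_indep3 u3 u2 u1.
Proof.
move=> hi a b c H; have [] := hi c b a.
  by rewrite addrC (addrC (c *: u1)) addrA.
by move=> -> -> ->.
Qed.

Lemma fwd_basis (F : fieldType) (V : lmodType F) (e u1 u2 u3 : V) :
  e != 0 -> lin_indep3 u1 u2 u3 -> span3 u1 u2 u3 e ->
  exists x0 y0, lin_indep3 e x0 y0 /\ forall z, span3 u1 u2 u3 z <-> span3 e x0 y0 z.
Proof.
move=> ne hind [k1 [k2 [k3 hE]]].
have [k10|k1ne] := eqVneq k1 0; last first.
  have [i h] := reduce hind hE k1ne; by exists u2, u3.
have [k20|k2ne] := eqVneq k2 0; last first.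
  have hE' : e = lc u2 u1 u3 k2 k1 k3 by rewrite hE /lc (addrC (k1 *: u1)).
  have [i h] := reduce (indep_p12 hind) hE' k2ne; exists u1, u3; split => // z.
  by split => [/span_p12/h|/h/span_p12].
have [k30|k3ne] := eqVneq k3 0; last first.
  have hE' : e = lc u3 u2 u1 k3 k2 k1.
    by rewrite hE /lc addrC (addrC (k1 *: u1)) addrA.
  have [i h] := reduce (indep_p13 hind) hE' k3ne; exists u2, u1; split => // z.
  by split => [/span_p13/h|/h/span_p13].
by move: ne; rewrite hE k10 k20 k30 !scale0r !addr0 eqxx.
Qed.


Lemma backward (F : fieldType) (V : lmodType F) (m : V -> V -> V) (e : V) (bar : V -> V) :
  bilinear_mul m -> unit_elt m e -> involutive_alg m e bar ->
  (forall u1 u2 u3 : V, subalgebra3 m e u1 u2 u3 -> commutative_on m (span3 u1 u2 u3)) ->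
  reversible m.
Proof.
move=> hm he hi Hc a b hab.
case: (classic (lin_indep3 e a b)) => [hind|hni].
  have [ta [na [_ haa]]] := quad hm he hi a.
  have [tb [nb [_ hbb]]] := quad hm he hi b.
  have [tab [nab [_ hq]]] := quad hm he hi (a + b).
  have haa' : m a a = lc e a b (- na) ta 0 by rewrite haa /lc scale0r addr0 scaleNr addrC.
  have hbb' : m b b = lc e a b (- nb) 0 tb.
    by rewrite hbb /lc scale0r addr0 scaleNr addrC.
  have hab' : m a b = lc e a b 0 0 0 by rewrite lc0.
  have hba : m b a = lc e a b (na + nb - nab) (tab - ta) (tab - tb).
    rewrite (mDl hm) !(mDr hm) hab addr0 in hq.
    have -> : m b a = tab *: (a + b) - nab *: e - m a a - m b b.
      by rewrite -hq [m a a + _]addrC !addrK.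
    have -> : tab *: (a + b) = lc e a b 0 tab tab by rewrite /lc scale0r add0r scalerDr.
    have -> : nab *: e = lc e a b nab 0 0 by rewrite /lc !scale0r !addr0.
    rewrite haa' hbb' !lcN !lcD; congr lc; ring.
  have sub : subalgebra3 m e e a b.
    split => //; first by exists 1, 0, 0; rewrite scale1r !scale0r !addr0.
    move=> z1 z2 [x1 [x2 [x3 ->]]] [y1 [y2 [y3 ->]]].
    exists (mlc1 (- na) 0 (na + nb - nab) (- nb) x1 x2 x3 y1 y2 y3),
      (mlc2 ta 0 (tab - ta) 0 x1 x2 x3 y1 y2 y3),
      (mlc3 0 0 (tab - tb) tb x1 x2 x3 y1 y2 y3).
    exact: (mul_lc hm he haa' hab' hba hbb').
  have sa : span3 e a b a by exists 0, 1, 0; rewrite scale1r !scale0r add0r addr0.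
  have sb : span3 e a b b by exists 0, 0, 1; rewrite scale1r !scale0r !add0r.
  by rewrite -(Hc _ _ _ sub a b sa sb).
have [r [s [t [Hrel Hnz]]]] : exists r s t : F, r *: e + s *: a + t *: b = 0 /\
    ~ [/\ r = 0, s = 0 & t = 0].
  apply: NNPP => Hn; apply: hni => r s t H; apply: NNPP => Hc'; apply: Hn.
  by exists r, s, t.
have ce : forall u, m u e = m e u by move=> u; rewrite (proj1 (he u)) (proj2 (he u)).
have [t0|tne] := eqVneq t 0; last first.
  have Hb : t *: b = - (r *: e + s *: a).
    by apply/eqP; rewrite -addr_eq0 addrC; apply/eqP.
  have Eb : b = lc e a a (- r / t) (- s / t) 0.
    rewrite -[b]scale1r -(mulVf tne) -scalerA Hb.
    have -> : - (r *: e + s *: a) = lc e a a (- r) (- s) 0.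
      by rewrite /lc scale0r addr0 opprD !scaleNr.
    by rewrite lcZ; congr lc; field.
  by move: hab; rewrite Eb -(comm_lc_r hm) ?ce.
have [s0|sne] := eqVneq s 0; last first.
  have Ha : s *: a = - (r *: e).
    by apply/eqP; rewrite -addr_eq0 addrC; move: Hrel; rewrite t0 scale0r addr0 => ->.
  have Ea : a = lc e b b (- r / s) 0 0.
    rewrite -[a]scale1r -(mulVf sne) -scalerA Ha.
    have -> : - (r *: e) = lc e b b (- r) 0 0.
      by rewrite /lc !scale0r !addr0 scaleNr.
    by rewrite lcZ; congr lc; field.
  by move: hab; rewrite Ea -(comm_lc_r hm) ?ce.
have rne : r != 0 by apply/eqP => r0; apply: Hnz.
have e0 : e = 0.
  by move: Hrel => /eqP; rewrite s0 t0 !scale0r !addr0 scaler_eq0 (negbTE rne) => /eqP.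
have b0 : b = 0 by rewrite -(proj1 (he b)) e0 (m0l hm).
by rewrite b0 (m0l hm).
Qed.

Unset Implicit Arguments.
Set Strict Implicit.

Theorem proposition4p9 (F : fieldType) (V : lmodType F)
    (m : V -> V -> V) (e : V) (bar : V -> V) :
  (2%:R : F) != 0 ->
  bilinear_mul m -> unit_elt m e -> involutive_alg m e bar ->
  (reversible m <->
   forall u1 u2 u3 : V, subalgebra3 m e u1 u2 u3 ->
     commutative_on m (span3 u1 u2 u3)).
Proof.
move=> h2 hm he hi; split; last exact: backward hm he hi.
move=> hr u1 u2 u3 [hind hspan hcl].
have ne : e != 0.
  apply/eqP => e0; have u10 : u1 = 0 by rewrite -(proj1 (he u1)) e0 (m0l hm).
  by have := indep_e hind; rewrite u10 eqxx.
have [x0 [y0 [ind' hiff]]] := fwd_basis ne hind hspan.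
have cm : commutative_on m (span3 e x0 y0).
  apply: (core h2 hm he hi hr ind') => z1 z2 /hiff h1 /hiff h3.
  by apply/hiff; apply: hcl.
by move=> z1 z2 /hiff h1 /hiff h3; apply: cm.
Qed.
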